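(* Let $X=\{x_0,\ldots,x_m\}$, $\tilde X=\{\tilde x_1,\ldots,\tilde x_q\}$ (commuting), $d\in\mathbb{R}^p[[\tilde X]]$, $c\in\mathbb{R}^q\langle\langle X\rangle\rangle$ proper, and $e\in\mathbb{R}^m\langle\langle X\rangle\rangle$. Then $d\circ(c\,\tilde\circ\,\delta_e)=(d\circ c)\,\tilde\circ\,\delta_e$, where $\circ$ is the Wiener-Fliess composition product and $\tilde\circ$ the multiplicative mixed composition product.
   Context: $\mathbb{R}^\ell\langle\langle X\rangle\rangle$: formal power series in noncommuting letters of $X$ with coefficients in $\mathbb{R}^\ell$; proper means $(c,\emptyset)=0$; $c_i$ is the $i$-th component; products of vector-valued series are componentwise. $\mathbb{R}^p[[\tilde X]]$: formal power series in commuting letters with coefficients in $\mathbb{R}^p$. Shuffle product $\sqcup\!\sqcup$: bilinear, $(x_i\eta)\sqcup\!\sqcup(x_j\xi)=x_i(\eta\sqcup\!\sqcup x_j\xi)+x_j(x_i\eta\sqcup\!\sqcup\xi)$, $\eta\sqcup\!\sqcup\emptyset=\emptyset\sqcup\!\sqcup\eta=\eta$. Wiener-Fliess composition (for proper $c$): $d\circ c=\sum_{\tilde\eta\in\tilde X^\ast}(d,\tilde\eta)c^{\sqcup\!\sqcup\tilde\eta}$ with $c^{\sqcup\!\sqcup\emptyset}=1$, $c^{\sqcup\!\sqcup\tilde x_i\tilde\eta}=c_i\sqcup\!\sqcup c^{\sqcup\!\sqcup\tilde\eta}$. Multiplicative mixed composition of $c\in\mathbb{R}^r\langle\langle X\rangle\rangle$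 and $e\in\mathbb{R}^m\langle\langle X\rangle\rangle$: $c\,\tilde\circ\,\delta_e=\sum_{\eta\in X^\ast}(c,\eta)\bar\phi_e(\eta)(\mathbf 1)$, where $\mathbf 1=1\emptyset$ and $\bar\phi_e$ is the homomorphism from words (concatenation) to linear endomorphisms of $\mathbb{R}\langle\langle X\rangle\rangle$ (composition) with $\bar\phi_e(x_0)(w)=x_0w$, $\bar\phi_e(x_i)(w)=x_i(e_i\sqcup\!\sqcup w)$, $i\ge1$. *)

(* Defs.v *)
From HB Require Import structures.
From mathcomp Require Import all_boot all_order all_algebra.
From mathcomp Require Import reals.
Set Implicit Arguments. Unset Strict Implicit. Unset Printing Implicit Defensive.
Import Order.TTheory GRing.Theory Num.Theory.
Local Open Scope ring_scope.

Section NCSeries.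
Variable R : comNzRingType.
Variable A : finType.

Definition ser := seq A -> R.

Fixpoint words (n : nat) : seq (seq A) :=
  if n is n'.+1 then [seq a :: w | a <- enum A, w <- words n'] else [:: [::]].

(* shuffle of two words, as a list of words with multiplicity:
   (a u) sh (b v) = a (u sh b v) + b (a u sh v),  u sh [] = [] sh u = u *)
Fixpoint shw (u v : seq A) {struct u} : seq (seq A) :=
  match u with
  | [::] => [:: v]
  | a :: u' =>
    let fix shw_aux (v : seq A) : seq (seq A) :=
      match v with
      | [::] => [:: u]
      | b :: v' => [seq a :: z | z <- shw u' v] ++ [seq b :: z | z <- shw_aux v']
      end in shw_aux v
  end.

(* bilinear extension of the word shuffle to series:
   (c sh d, w) = sum_{u,v} (c,u) (d,v) (u sh v, w);
   only |u| + |v| = |w| can contribute, so the sum is finite. *)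
Definition shuffle (c d : ser) : ser := fun w =>
  \sum_(i < (size w).+1) \sum_(u <- words i) \sum_(v <- words (size w - i))
     c u * d v * (count_mem w (shw u v))%:R.

Definition one : ser := fun w => (w == [::])%:R.

Definition shpow (c : ser) (n : nat) : ser := iter n (shuffle c) one.

Definition proper_ser (l : nat) (c : 'I_l -> ser) : Prop := forall i, c i [::] = 0.

Definition prepend (a : A) (s : ser) : ser := fun w =>
  if w is b :: w' then (b == a)%:R * s w' else 0.

End NCSeries.

(* Commuting words over X~ = {x~_1,...,x~_q} are monomials, i.e. exponent
   vectors {ffun 'I_q -> nat}; d in R^p[[X~]] is d : 'I_p -> {ffun 'I_q -> nat} -> R. *)

(* c^{sh eta~} for a commutative word eta~ = x~_1^{n_1} ... x~_q^{n_q};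
   by commutativity/associativity of sh this is c_1^{sh n_1} sh ... sh c_q^{sh n_q} *)
Definition shpowv (R : comNzRingType) (A : finType) (q : nat)
  (c : 'I_q -> ser R A) (n : {ffun 'I_q -> nat}) : ser R A :=
  \big[@shuffle R A/@one R A]_(i < q) shpow (c i) (n i).

(* d o c = sum_{eta~} (d,eta~) c^{sh eta~}.  For proper c, c^{sh eta~} has
   order >= |eta~|, so only eta~ with all exponents <= |w| contribute to the
   coefficient of w: the sum below is this (finite) coefficient. *)
Definition wf_comp (R : comNzRingType) (A : finType) (p q : nat)
  (d : 'I_p -> {ffun 'I_q -> nat} -> R) (c : 'I_q -> ser R A) : 'I_p -> ser R A :=
  fun k w => \sum_(f : {ffun 'I_q -> 'I_(size w).+1})
               d k [ffun i => val (f i)] * shpowv c [ffun i => val (f i)] w.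

(* Alphabet X = {x_0,...,x_m} is 'I_m.+1; e in R^m<<X>> is e : 'I_m -> ser,
   with e_i (i >= 1) being e (i-1), obtained via unlift ord0. *)
Definition phi (R : comNzRingType) (m : nat) (e : 'I_m -> ser R 'I_m.+1)
  (a : 'I_m.+1) (s : ser R 'I_m.+1) : ser R 'I_m.+1 :=
  match unlift ord0 a with
  | None => prepend a s
  | Some j => prepend a (shuffle (e j) s)
  end.

(* phibar_e(eta)(1): phibar_e is the monoid morphism words -> (End, o) *)
Definition phibar1 (R : comNzRingType) (m : nat) (e : 'I_m -> ser R 'I_m.+1)
  (eta : seq 'I_m.+1) : ser R 'I_m.+1 :=
  foldr (phi e) (@one R 'I_m.+1) eta.

(* c ~o delta_e = sum_eta (c,eta) phibar_e(eta)(1).  phibar_e(eta)(1) is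
   supported on words of length >= |eta|, so the coefficient of w only
   involves |eta| <= |w|. *)
Definition mixed_comp (R : comNzRingType) (m r : nat)
  (c : 'I_r -> ser R 'I_m.+1) (e : 'I_m -> ser R 'I_m.+1) : 'I_r -> ser R 'I_m.+1 :=
  fun k w => \sum_(i < (size w).+1) \sum_(eta <- words 'I_m.+1 i)
               c k eta * phibar1 e eta w.

(* Main.v *)
Require Import Defs.
From HB Require Import structures.
From mathcomp Require Import all_boot all_order all_algebra.
From mathcomp Require Import reals.
From Stdlib Require Import FunctionalExtensionality.
From mathcomp Require Import zify.
Set Implicit Arguments. Unset Strict Implicit. Unset Printing Implicit Defensive.
Import Order.TTheory GRing.Theory Num.Theory.
Local Open Scope ring_scope.

Section Sh.
Variables (R : comNzRingType) (A : finType).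
Local Notation ser := (ser R A).

Definition der (a : A) (s : ser) : ser := fun w => s (a :: w).

Lemma shw_nil_r (u : seq A) : shw u [::] = [:: u]. Proof. by case: u. Qed.
Lemma shw_cons2 (b : A) u c v : shw (b::u) (c::v) =
  [seq b :: z | z <- shw u (c::v)] ++ [seq c :: z | z <- shw (b::u) v].
Proof. by []. Qed.

Lemma count_cons_map (a b : A) w (L : seq (seq A)) :
  (count_mem (a :: w) [seq b :: z | z <- L] = (b == a) * count_mem w L)%N.
Proof.
elim: L => [|z L IH] /=; first by rewrite muln0.
rewrite IH eqseq_cons; case: (b == a) => /=; by rewrite ?mul1n ?mul0n.
Qed.

Lemma count_shw_cons (a : A) w u v : (count_mem (a :: w) (shw u v) =
  (if u is b :: u' then (b == a) * count_mem w (shw u' v) else 0) +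
  (if v is b :: v' then (b == a) * count_mem w (shw u v') else 0))%N.
Proof.
case: u => [|b u]; case: v => [|c v] //=.
- by rewrite eqseq_cons; case: (c == a); case: (v == w).
- by rewrite shw_nil_r /= eqseq_cons; case: (b == a); case: (u == w).
- by rewrite count_cat !count_cons_map.
Qed.

Lemma one_cons (a : A) w : @Defs.one R A (a :: w) = 0. Proof. by []. Qed.

Lemma sum_words_S n (F : seq A -> R) :
  \sum_(w <- words A n.+1) F w = \sum_(b <- enum A) \sum_(w <- words A n) F (b :: w).
Proof. by rewrite /= big_allpairs_dep. Qed.

Lemma sum_pick (a : A) (G : A -> R) :
  (forall b, b != a -> G b = 0) -> \sum_(b <- enum A) G b = G a.
Proof. by move=> H; rewrite (bigD1_seq a) ?mem_enum ?enum_uniq //= big1 ?addr0. Qed.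

Lemma sh_nil (s t : ser) : shuffle s t [::] = s [::] * t [::].
Proof. by rewrite /shuffle /= big_ord1 /= !big_cons !big_nil /= !addr0 mulr1. Qed.

Lemma sh_cons (s t : ser) a w :
  shuffle s t (a :: w) = shuffle (der a s) t w + shuffle s (der a t) w.
Proof.
have H1 : \sum_(i < (size w).+2) \sum_(u <- words A i)
     \sum_(v <- words A ((size w).+1 - i))
       s u * t v * (if u is b :: u' then (b == a) * count_mem w (shw u' v) else 0)%N%:R
   = shuffle (der a s) t w.
  rewrite big_ord_recl /= big_cons big_nil /= big1 ?add0r ?addr0; last first.
    by move=> v _; rewrite mulr0.
  apply: eq_bigr => i _; rewrite big_allpairs_dep /bump /= add0n add1n (sum_pick (a:=a)).
    by rewrite subSS; apply: eq_bigr => u _; apply: eq_bigr => v _; rewrite eqxx mul1n.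
  move=> b nba; rewrite big1 // => u _; rewrite big1 // => v _.
  by rewrite (negbTE nba) mul0n mulr0.
have H2 : \sum_(i < (size w).+2) \sum_(u <- words A i)
     \sum_(v <- words A ((size w).+1 - i))
       s u * t v * (if v is b :: v' then (b == a) * count_mem w (shw u v') else 0)%N%:R
   = shuffle s (der a t) w.
  rewrite big_ord_recr /= subnn [X in _ + X]big1 ?addr0; last first.
    by move=> u _; rewrite big_cons big_nil /= mulr0 addr0.
  apply: eq_bigr => i _; apply: eq_bigr => u _.
  rewrite subSn /=; last by rewrite -ltnS ltn_ord.
  rewrite sum_words_S (sum_pick (a:=a)).
    by apply: eq_bigr => v _; rewrite eqxx mul1n.
  move=> b nba; rewrite big1 // => v _.
  by rewrite (negbTE nba) mul0n mulr0.
rewrite -H1 -H2 -big_split; apply: eq_bigr => i _ /=.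
rewrite -big_split; apply: eq_bigr => u _; rewrite -big_split; apply: eq_bigr => v _.
by rewrite count_shw_cons natrD mulrDr.
Qed.

Lemma sh_addl (s1 s2 t : ser) w :
  shuffle (fun u => s1 u + s2 u) t w = shuffle s1 t w + shuffle s2 t w.
Proof.
elim: w s1 s2 t => [|a w IH] s1 s2 t; first by rewrite !sh_nil mulrDl.
rewrite !sh_cons.
have -> : der a (fun u => s1 u + s2 u) = fun u => der a s1 u + der a s2 u by [].
by rewrite !IH addrACA.
Qed.

Lemma sh_addr (s t1 t2 : ser) w :
  shuffle s (fun u => t1 u + t2 u) w = shuffle s t1 w + shuffle s t2 w.
Proof.
elim: w s t1 t2 => [|a w IH] s t1 t2; first by rewrite !sh_nil mulrDr.
rewrite !sh_cons.
have -> : der a (fun u => t1 u + t2 u) = fun u => der a t1 u + der a t2 u by [].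
by rewrite !IH addrACA.
Qed.

Lemma sh_sumr (I : Type) (r : seq I) (s : ser) (F : I -> ser) w :
  shuffle s (fun u => \sum_(i <- r) F i u) w = \sum_(i <- r) shuffle s (F i) w.
Proof.
elim: w s F => [|a w IH] s F.
  by rewrite sh_nil mulr_sumr; apply: eq_bigr => i _; rewrite sh_nil.
rewrite sh_cons.
have -> : der a (fun u => \sum_(i <- r) F i u) = fun u => \sum_(i <- r) der a (F i) u by [].
rewrite !IH -big_split; apply: eq_bigr => i _; by rewrite sh_cons.
Qed.

Lemma sh_scaler (s t : ser) (r : R) w :
  shuffle s (fun u => r * t u) w = r * shuffle s t w.
Proof.
elim: w s t => [|a w IH] s t; first by rewrite !sh_nil mulrCA.
rewrite !sh_cons.
have -> : der a (fun u => r * t u) = fun u => r * der a t u by [].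
by rewrite !IH mulrDr.
Qed.

Lemma sh0r (s : ser) w : shuffle s (fun _ => 0) w = 0.
Proof.
elim: w s => [|a w IH] s; first by rewrite sh_nil mulr0.
by rewrite sh_cons IH; have -> : der a (fun _ : seq A => 0 : R) = fun _ => 0 by [];
  rewrite IH addr0.
Qed.

Lemma sh_comm (s t : ser) w : shuffle s t w = shuffle t s w.
Proof.
elim: w s t => [|a w IH] s t; first by rewrite !sh_nil mulrC.
by rewrite !sh_cons IH addrC (IH s).
Qed.

Lemma der_sh (s t : ser) a :
  der a (shuffle s t) = fun u => shuffle (der a s) t u + shuffle s (der a t) u.
Proof. by apply: functional_extensionality => u; rewrite /der sh_cons. Qed.

Lemma sh_assoc (s t u : ser) w :
  shuffle (shuffle s t) u w = shuffle s (shuffle t u) w.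
Proof.
elim: w s t u => [|a w IH] s t u; first by rewrite !sh_nil mulrA.
rewrite !sh_cons !der_sh sh_addl sh_addr !IH.
by rewrite addrA.
Qed.

Lemma sh_onel (t : ser) w : shuffle (@Defs.one R A) t w = t w.
Proof.
elim: w t => [|a w IH] t; first by rewrite sh_nil mul1r.
rewrite sh_cons IH.
have -> : der a (@Defs.one R A) = fun _ => 0 by [].
by rewrite sh_comm sh0r add0r.
Qed.

Lemma sh_local w (s s' t t' : ser) :
  (forall u, size u <= size w -> s u = s' u)%N ->
  (forall u, size u <= size w -> t u = t' u)%N ->
  shuffle s t w = shuffle s' t' w.
Proof.
elim: w s s' t t' => [|a w IH] s s' t t' Hs Ht.
  by rewrite !sh_nil Hs ?Ht.
rewrite !sh_cons; congr (_ + _); apply: IH => v Hv /=.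
- by rewrite /der Hs //= ltnS.
- by apply: Ht; rewrite /= leqW.
- by apply: Hs; rewrite /= leqW.
- by rewrite /der Ht //= ltnS.
Qed.

Lemma sh_order w (s t : ser) n1 n2 :
  (forall u, (size u < n1)%N -> s u = 0) ->
  (forall u, (size u < n2)%N -> t u = 0) ->
  (size w < n1 + n2)%N -> shuffle s t w = 0.
Proof.
elim: w s t n1 n2 => [|a w IH] s t n1 n2 Hs Ht Hw.
  rewrite sh_nil; case: n1 Hs Hw => [|n1] Hs Hw.
    by rewrite Ht ?mulr0.
  by rewrite Hs ?mul0r.
rewrite sh_cons (IH (der a s) t n1.-1 n2) ?(IH s (der a t) n1 n2.-1) ?addr0 //.
- by move=> u Hu; apply: Ht; rewrite /=; lia.
- by rewrite /=; move: Hw => /=; lia.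
- by move=> u Hu; apply: Hs; rewrite /=; lia.
- by rewrite /=; move: Hw => /=; lia.
Qed.

Lemma words_size n (w : seq A) : w \in words A n -> size w = n.
Proof.
elim: n w => [|n IH] w /=; first by rewrite inE => /eqP ->.
by case/allpairsPdep => b [w' [_ Hw' ->]] /=; rewrite IH.
Qed.
End Sh.
Section Mixed.
Variables (R : comNzRingType) (m : nat) (e : 'I_m -> ser R 'I_m.+1).
Local Notation A := ('I_m.+1).
Local Notation ser := (ser R A).

Definition E (a : A) : ser := if unlift ord0 a is Some j then e j else @Defs.one R A.

Lemma phiE a (s : ser) : phi e a s = prepend a (shuffle (E a) s).
Proof.
rewrite /phi /E; case: unlift => [j|] //.
by congr (prepend _ _); apply: functional_extensionality => w; rewrite sh_onel.
Qed.

Lemma Psi_support (eta u : seq A) : (size u < size eta)%N -> phibar1 e eta u = 0.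
Proof.
elim: eta u => [|b eta IH] u //= Hu.
rewrite phiE; case: u Hu => [|x u] Hu //=.
rewrite (@sh_local _ _ u _ (E b) _ (fun _ => 0)) ?sh0r ?mulr0 // => v Hv.
by apply: IH; move: Hu; rewrite /= ltnS; apply: leq_ltn_trans.
Qed.

Definition Mx (s : ser) : ser := fun w =>
  \sum_(i < (size w).+1) \sum_(eta <- words A i) s eta * phibar1 e eta w.

Lemma sum_trunc n1 n2 (F : nat -> R) : (n1 <= n2)%N ->
  (forall i, (n1 <= i < n2)%N -> F i = 0) ->
  \sum_(i < n2) F i = \sum_(i < n1) F i.
Proof.
move=> le H; rewrite -!(big_mkord xpredT) (@big_cat_nat _ _ _ n1 0 n2 _ _ (leq0n n1) le) /=.
by rewrite [X in _ + X]big_nat_cond [X in _ + X]big1 ?addr0 // => i /andP[Hi _]; apply: H.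
Qed.

Lemma Mx_trunc (s : ser) u N : (size u <= N)%N ->
  Mx s u = \sum_(i < N.+1) \sum_(eta <- words A i) s eta * phibar1 e eta u.
Proof.
move=> Hu; rewrite /Mx; symmetry.
apply: (sum_trunc (F := fun i => \sum_(eta <- words A i) s eta * phibar1 e eta u)) => //.
move=> i /andP[Hi _]; rewrite big1_seq // => eta /andP[_ Heta].
by rewrite Psi_support ?mulr0 // (words_size Heta).
Qed.

Lemma Mx_nil (s : ser) : Mx s [::] = s [::].
Proof. by rewrite /Mx big_ord1 /= big_cons big_nil addr0 /= mulr1. Qed.

Lemma Mx_cons (s : ser) a w : Mx s (a :: w) = shuffle (E a) (Mx (der a s)) w.
Proof.
rewrite /Mx big_ord_recl.
rewrite [X in X + _]big_cons big_nil /= one_cons mulr0 addr0 add0r.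
transitivity (\sum_(i < (size w).+1) \sum_(eta <- words A i)
                 s (a :: eta) * shuffle (E a) (phibar1 e eta) w).
  apply: eq_bigr => i _. rewrite big_allpairs_dep add0n (sum_pick (a:=a)).
    by apply: eq_bigr => eta _; rewrite /= phiE /= eqxx mul1r.
  move=> b nba; rewrite big1_seq // => eta _.
  by rewrite /= phiE /= eq_sym (negbTE nba) mul0r mulr0.
rewrite (@sh_local _ _ w _ (E a) _ (fun u => \sum_(i < (size w).+1)
     \sum_(eta <- words A i) s (a :: eta) * phibar1 e eta u)) //; last first.
  by move=> u Hu; apply: Mx_trunc.
rewrite sh_sumr; apply: eq_bigr => i _; rewrite sh_sumr; apply: eq_bigr => eta _.
by rewrite sh_scaler.
Qed.

Lemma Mx_add (s t : ser) w : Mx (fun u => s u + t u) w = Mx s w + Mx t w.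
Proof.
rewrite /Mx -big_split; apply: eq_bigr => i _; rewrite -big_split.
by apply: eq_bigr => eta _; rewrite mulrDl.
Qed.

Lemma Mx_sh_aux n : forall w, (size w <= n)%N -> forall s t : ser,
  Mx (shuffle s t) w = shuffle (Mx s) (Mx t) w.
Proof.
elim: n => [|n IH] [|a w] Hw s t //; try by rewrite Mx_nil !sh_nil !Mx_nil.
rewrite Mx_cons sh_cons der_sh.
have -> : Mx (fun u => shuffle (der a s) t u + shuffle s (der a t) u) =
   fun u => Mx (shuffle (der a s) t) u + Mx (shuffle s (der a t)) u.
  by apply: functional_extensionality => u; rewrite Mx_add.
rewrite sh_addr.
rewrite (@sh_local _ _ w _ (E a) (Mx (shuffle (der a s) t))
           (shuffle (Mx (der a s)) (Mx t))) //; last first.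
  by move=> u Hu; apply: IH; move: Hw; rewrite /= ltnS; apply: leq_trans.
rewrite (@sh_local _ _ w _ (E a) (Mx (shuffle s (der a t)))
           (shuffle (Mx s) (Mx (der a t)))) //; last first.
  by move=> u Hu; apply: IH; move: Hw; rewrite /= ltnS; apply: leq_trans.
have Hd : forall s' : ser, der a (Mx s') = shuffle (E a) (Mx (der a s')).
  by move=> s'; apply: functional_extensionality => u; exact: Mx_cons.
rewrite !Hd sh_assoc; congr (_ + _).
rewrite -!sh_assoc.
have -> : shuffle (E a) (Mx s) = shuffle (Mx s) (E a).
  by apply: functional_extensionality => u; apply: sh_comm.
by [].
Qed.

Lemma Mx_sh (s t : ser) : Mx (shuffle s t) = shuffle (Mx s) (Mx t).
Proof. by apply: functional_extensionality => w; apply: (Mx_sh_aux (leqnn _)). Qed.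

Lemma Mx_one : Mx (@Defs.one R A) = @Defs.one R A.
Proof.
apply: functional_extensionality => w.
rewrite /Mx big_ord_recl /= big_cons big_nil /= mul1r addr0.
rewrite big1 ?addr0 // => i _; rewrite big1_seq // => eta /andP[_ Heta].
move: Heta => /allpairsPdep [b [w' [_ _ ->]]].
by rewrite one_cons mul0r.
Qed.

Lemma Mx_shpow (s : ser) n : Mx (shpow s n) = shpow (Mx s) n.
Proof.
elim: n => [|n IH]; first exact: Mx_one.
by rewrite /shpow /= Mx_sh -/(shpow s n) IH.
Qed.

Lemma Mx_shpowv q (c : 'I_q -> ser) (f : {ffun 'I_q -> nat}) :
  Mx (shpowv c f) = shpowv (fun i => Mx (c i)) f.
Proof.
rewrite /shpowv; apply: (big_rec2 (fun x y => Mx x = y)) => [|i x y _ H].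
  exact: Mx_one.
by rewrite Mx_sh Mx_shpow H.
Qed.
End Mixed.

Lemma shpow_order (R : comNzRingType) (A : finType) (s : ser R A) n w :
  s [::] = 0 -> (size w < n)%N -> shpow s n w = 0.
Proof.
move=> Hs; elim: n w => [|n IH] w // Hw.
rewrite /shpow /= -/(shpow s n).
apply: (@sh_order _ _ w _ _ 1 n) => //.
  by case=> //.
Qed.

Lemma shpowv_order (R : comNzRingType) (A : finType) q (c : 'I_q -> ser R A)
  (f : {ffun 'I_q -> nat}) : (forall i, c i [::] = 0) ->
  forall w, (size w < \sum_(i < q) f i)%N -> shpowv c f w = 0.
Proof.
move=> Hc; rewrite /shpowv.
apply: (big_rec2 (fun (x : ser R A) (n : nat) => forall w, (size w < n)%N -> x w = 0)) => //.
move=> i x n _ Hx w Hw.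
apply: (@sh_order _ _ w _ _ (f i) n) => // u Hu.
exact: shpow_order.
Qed.

Lemma sum_ffun_trunc (R : comNzRingType) (q N M : nat) (F : {ffun 'I_q -> nat} -> R) :
  (M <= N)%N -> (forall n : {ffun 'I_q -> nat}, (exists j, (M < n j)%N) -> F n = 0) ->
  \sum_(f : {ffun 'I_q -> 'I_N.+1}) F [ffun i => val (f i)] =
  \sum_(g : {ffun 'I_q -> 'I_M.+1}) F [ffun i => val (g i)].
Proof.
move=> MN HF.
rewrite (bigID (fun f : {ffun 'I_q -> 'I_N.+1} => [forall j, (f j <= M)%N])) /=.
rewrite [X in _ + X]big1 ?addr0; last first.
  move=> f /forallPn [j Hj]; apply: HF; exists j; by rewrite ffunE ltnNge.
have MN1 : (M.+1 <= N.+1)%N by [].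
rewrite (reindex_onto (fun g : {ffun 'I_q -> 'I_M.+1} => [ffun i => widen_ord MN1 (g i)])
   (fun f : {ffun 'I_q -> 'I_N.+1} => [ffun i => (inord (f i) : 'I_M.+1)])) /=.
  apply: eq_big => [g|g _].
    apply/andP; split.
      by apply/forallP => j; rewrite ffunE /= -ltnS ltn_ord.
    apply/eqP/ffunP => j; rewrite !ffunE; apply: val_inj; by rewrite /= inordK.
  by congr F; apply/ffunP => j; rewrite !ffunE.
move=> f /forallP Hf; apply/ffunP => j; rewrite !ffunE; apply: val_inj.
by rewrite /= inordK // ltnS; exact: Hf.
Qed.

Theorem theorem13 (R : realType) (m p q : nat)
  (d : 'I_p -> {ffun 'I_q -> nat} -> R)
  (c : 'I_q -> ser R 'I_m.+1) (e : 'I_m -> ser R 'I_m.+1) :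
  proper_ser c ->
  wf_comp d (mixed_comp c e) = mixed_comp (wf_comp d c) e.
Proof.
move=> Hc; apply: functional_extensionality => k; apply: functional_extensionality => w.
have -> : mixed_comp c e = fun i => Mx e (c i) by [].
change (mixed_comp (wf_comp d c) e k w) with (Mx e (wf_comp d c k) w).
rewrite /wf_comp.
under eq_bigr do rewrite -Mx_shpowv.
rewrite /Mx; symmetry.
transitivity (\sum_(i < (size w).+1) \sum_(eta <- words 'I_m.+1 i)
  \sum_(f : {ffun 'I_q -> 'I_(size w).+1}) d k [ffun j => val (f j)] *
      shpowv c [ffun j => val (f j)] eta * phibar1 e eta w).
  apply: eq_bigr => i _; apply: eq_big_seq => eta Heta.
  rewrite mulr_suml; symmetry.
  apply: (sum_ffun_trunc
    (F := fun n => d k n * shpowv c n eta * phibar1 e eta w)).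
    by rewrite (words_size Heta) -ltnS ltn_ord.
  move=> n [j Hj]; rewrite shpowv_order ?mulr0 ?mul0r //.
  apply: (leq_trans Hj); rewrite (bigD1 j) //=; exact: leq_addr.
transitivity (\sum_(i < (size w).+1) \sum_(f : {ffun 'I_q -> 'I_(size w).+1})
  \sum_(eta <- words 'I_m.+1 i) d k [ffun j => val (f j)] *
      shpowv c [ffun j => val (f j)] eta * phibar1 e eta w).
  by apply: eq_bigr => i _; apply: exchange_big.
rewrite exchange_big; apply: eq_bigr => f _.
rewrite mulr_sumr; apply: eq_bigr => i _; rewrite mulr_sumr; apply: eq_bigr => eta _.
by rewrite mulrA.
Qed.
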